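(* Let $\{\omega_n\}_{n\ge0}$ be a sequence in $\mathbb{T}$ with the repetition property. Then each of the following sequences has the repetition property: (a) $\{\omega_{n+l}\}_{n\ge0}$ for every $l\in\mathbb{Z}_+$; (b) $\{\omega_{nl}\}_{n\ge0}$ for every $l\in\mathbb{Z}_+$; (c) $\{l\omega_n\}_{n\ge0}$ for every $l\in\mathbb{Z}$. Moreover, the original sequence together with all the sequences listed in (a), (b), (c) have the joint repetition property.
   Context: $\mathbb{T}=\mathbb{R}/\mathbb{Z}$ with metric $\mathrm{dist}(x,y)=\langle x-y\rangle$, where $\langle\tau\rangle=\min\{|\hat\tau-p|:p\in\mathbb{Z}\}$ for any representative $\hat\tau\in\mathbb{R}$ of $\tau$. $\mathbb{Z}_+=\{1,2,\ldots\}$. A sequence $\{\omega_n\}_{n\ge0}$ in a metric space $\Omega$ has the repetition property if for every $\varepsilon>0$ and $r \in \mathbb{Z}_+$ there exists $q \in \mathbb{Z}_+$ such that $\mathrm{dist}(\omega_n,\omega_{n+q}) < \varepsilon$ for $n = 0,1,\ldots, rq$. A family of sequences $\{\omega^{(\gamma)}_n\}_{n\ge0}$ in metric spaces $\Omega^{(\gamma)}$, $\gamma\in\Gamma$, has the joint repetition property if each of them has the repetition property and, for each finite subfamily and each $\varepsilon>0$, $r\in\mathbb{Z}_+$, a single $q\in\mathbb{Z}_+$ can be chosen that works simultaneously for all sequences in the subfamily. *)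

(* Defs.v *)
(* the torus T = R/Z is represented by real representatives. *)
From Stdlib Require Import Reals List.
Open Scope R_scope.

(* <tau> = min { |tau - p| : p in Z }.  With f = tau - floor tau in [0,1),
   the nearest integers are floor tau and floor tau + 1, so the min is
   min (f, 1 - f).  Int_part is the floor in Stdlib. *)
Definition tnorm (tau : R) : R :=
  let f := tau - IZR (Int_part tau) in Rmin f (1 - f).

Definition tdist (x y : R) : R := tnorm (x - y).

Definition repetition (w : nat -> R) : Prop :=
  forall (eps : R) (r : nat), 0 < eps -> (1 <= r)%nat ->
    exists q : nat, (1 <= q)%nat /\
      forall n : nat, (n <= r * q)%nat -> tdist (w n) (w (n + q)%nat) < eps.

Definition joint_repetition {G : Type} (F : G -> nat -> R) : Prop :=
  (forall g, repetition (F g)) /\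
  forall (S : list G) (eps : R) (r : nat), 0 < eps -> (1 <= r)%nat ->
    exists q : nat, (1 <= q)%nat /\
      forall g, In g S ->
        forall n : nat, (n <= r * q)%nat -> tdist (F g n) (F g (n + q)%nat) < eps.

(* Indices of the family in Lemma 3.1: the original sequence, shifts (a),
   dilations of the index (b), integer multiples (c). *)
Inductive fam_index : Type :=
  | FOrig : fam_index
  | FShift : nat -> fam_index
  | FDil : nat -> fam_index
  | FMul : Z -> fam_index.

Definition fam_valid (i : fam_index) : Prop :=
  match i with
  | FOrig => True
  | FShift l => (1 <= l)%nat
  | FDil l => (1 <= l)%nat
  | FMul _ => True
  end.

Definition fam (w : nat -> R) (i : fam_index) : nat -> R :=
  match i with
  | FOrig => w
  | FShift l => fun n => w (n + l)%nat
  | FDil l => fun n => w (n * l)%nat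
  | FMul l => fun n => IZR l * w n
  end.

(* Main.v *)
Require Import Defs.
From Stdlib Require Import Reals List Lra Lia Psatz ZArith.
Open Scope R_scope.

Lemma tnorm_spec x : (forall p:Z, tnorm x <= Rabs (x - IZR p)) /\ exists p:Z, tnorm x = Rabs (x - IZR p).
Proof.
  unfold tnorm; cbv zeta. set (z := Int_part x). destruct (base_Int_part x) as [H1 H2].
  fold z in H1, H2. split.
  - intros p. destruct (Z_le_gt_dec p z) as [Hp|Hp].
    + apply IZR_le in Hp. eapply Rle_trans; [apply Rmin_l|]. rewrite Rabs_right; lra.
    + assert (Hq : (z + 1 <= p)%Z) by lia. apply IZR_le in Hq. rewrite plus_IZR in Hq.
      eapply Rle_trans; [apply Rmin_r|]. rewrite Rabs_left1; lra.
  - destruct (Rle_dec (x - IZR z) (1 - (x - IZR z))).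
    + exists z. rewrite Rmin_left by lra. rewrite Rabs_right; lra.
    + exists (z+1)%Z. rewrite Rmin_right by lra. rewrite plus_IZR, Rabs_left1; lra.
Qed.

Lemma tnorm_nonneg x : 0 <= tnorm x.
Proof. destruct (tnorm_spec x) as [_ [p ->]]; apply Rabs_pos. Qed.

Lemma tnorm_add x y : tnorm (x+y) <= tnorm x + tnorm y.
Proof.
  destruct (tnorm_spec x) as [_ [p Hp]]. destruct (tnorm_spec y) as [_ [p' Hp']].
  destruct (tnorm_spec (x+y)) as [H _].
  eapply Rle_trans. apply (H (p+p')%Z). rewrite plus_IZR, Hp, Hp'.
  replace (x+y-(IZR p + IZR p')) with ((x-IZR p)+(y-IZR p')) by ring. apply Rabs_triang.
Qed.

Lemma tnorm_mul k x : tnorm (IZR k * x) <= Rabs (IZR k) * tnorm x.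
Proof.
  destruct (tnorm_spec x) as [_ [p Hp]]. destruct (tnorm_spec (IZR k * x)) as [H _].
  eapply Rle_trans. apply (H (k*p)%Z). rewrite mult_IZR, Hp.
  replace (IZR k * x - IZR k * IZR p) with (IZR k * (x - IZR p)) by ring.
  rewrite Rabs_mult; lra.
Qed.

Lemma tdist_trans a b c : tdist a c <= tdist a b + tdist b c.
Proof. unfold tdist. replace (a-c) with ((a-b)+(b-c)) by ring. apply tnorm_add. Qed.

Definition good (w F : nat -> R) := exists A:nat, (1<=A)%nat /\ exists C:R, 0 < C /\
  forall r q delta, (1<=q)%nat ->
   (forall n, (n <= (r+1)*A*q)%nat -> tdist (w n) (w (n+q)%nat) < delta) ->
   forall n, (n <= r*q)%nat -> tdist (F n) (F (n+q)%nat) < C*delta.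

Lemma good_list {G} w (F:G->nat->R) : (forall g, good w (F g)) -> forall S,
  exists A:nat, (1<=A)%nat /\ exists C:R, 0 < C /\
  forall r q delta, (1<=q)%nat ->
   (forall n, (n <= (r+1)*A*q)%nat -> tdist (w n) (w (n+q)%nat) < delta) ->
   forall g, In g S -> forall n, (n <= r*q)%nat -> tdist (F g n) (F g (n+q)%nat) < C*delta.
Proof.
  intros Hg S. induction S as [|a S IH].
  - exists 1%nat; split; [lia|]. exists 1; split; [lra|]. intros. destruct H1.
  - destruct (Hg a) as [A1 [HA1 [C1 [HC1 H1]]]]. destruct IH as [A2 [HA2 [C2 [HC2 H2]]]].
    exists (A1*A2)%nat; split; [nia|]. exists (C1+C2); split; [lra|].
    intros r q delta Hq Hw g Hin n Hn.
    assert (Hd : 0 < delta).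
    { specialize (Hw 0%nat ltac:(lia)). pose proof (tnorm_nonneg (w 0%nat - w (0+q)%nat)).
      unfold tdist in Hw. lra. }
    destruct Hin as [<-|Hin].
    + assert (X := H1 r q delta Hq ltac:(intros m Hm; apply Hw; nia) n Hn). nra.
    + assert (X := H2 r q delta Hq ltac:(intros m Hm; apply Hw; nia) g Hin n Hn). nra.
Qed.

Lemma joint_from_good {G} w (F:G->nat->R) : repetition w -> (forall g, good w (F g)) ->
  joint_repetition F.
Proof.
  intros Hw Hg.
  assert (K : forall (S : list G) (eps : R) (r : nat), 0 < eps -> (1 <= r)%nat ->
    exists q : nat, (1 <= q)%nat /\
      forall g, In g S ->
        forall n : nat, (n <= r * q)%nat -> tdist (F g n) (F g (n + q)%nat) < eps).
  { intros S eps r He Hr. destruct (good_list w F Hg S) as [A [HA [C [HC H]]]].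
    destruct (Hw (eps/C) ((r+1)*A)%nat) as [q [Hq Hq']].
    - apply Rdiv_lt_0_compat; lra.
    - nia.
    - exists q; split; [exact Hq|]. intros g Hin n Hn.
      replace eps with (C*(eps/C)) by (field; lra).
      apply (H r q (eps/C) Hq Hq' g Hin n Hn). }
  split; [|exact K].
  intros g eps r He Hr. destruct (K (g::nil) eps r He Hr) as [q [Hq H]].
  exists q; split; [exact Hq|]. apply H; left; reflexivity.
Qed.

Lemma chain w m q delta j :
  (forall k, (k <= j)%nat -> tdist (w (m+k*q)%nat) (w (m+k*q+q)%nat) < delta) ->
  tdist (w m) (w (m + S j*q)%nat) < INR (S j) * delta.
Proof.
  induction j as [|j IH]; intros H.
  - replace (m + 1*q)%nat with (m+0*q+q)%nat by lia.
    replace m with (m+0*q)%nat at 1 by lia. rewrite Rmult_1_l. apply H; lia.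
  - eapply Rle_lt_trans. apply (tdist_trans _ (w (m + S j * q)%nat)).
    rewrite (S_INR (S j)).
    replace (m + S (S j) * q)%nat with (m + S j * q + q)%nat by nia.
    assert (A1 := IH ltac:(intros k Hk; apply H; lia)).
    assert (A2 := H (S j) ltac:(lia)). lra.
Qed.

Lemma good_all w (i : {i : fam_index | fam_valid i}) : good w (fam w (proj1_sig i)).
Proof.
  destruct i as [i Hi]. destruct i as [|l|l|k]; simpl in *.
  - exists 1%nat; split; [lia|]. exists 1; split; [lra|].
    intros r q d Hq H n Hn. rewrite Rmult_1_l. apply H; nia.
  - exists l; split; [lia|]. exists 1; split; [lra|].
    intros r q d Hq H n Hn. rewrite Rmult_1_l.
    replace (n+q+l)%nat with (n+l+q)%nat by lia. apply H; nia.
  - destruct l as [|l']; [lia|].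
    exists (S l'); split; [lia|]. exists (INR (S l')); split; [apply lt_0_INR; lia|].
    intros r q d Hq H n Hn.
    replace ((n+q)*S l')%nat with (n*S l' + S l' * q)%nat by nia.
    apply chain. intros k Hk. apply H.
    assert (n * S l' <= r*q*S l')%nat by nia.
    assert (k*q <= l'*q)%nat by nia. nia.
  - exists 1%nat; split; [lia|]. exists (Rabs (IZR k) + 1); split.
    { pose proof (Rabs_pos (IZR k)); lra. }
    intros r q d Hq H n Hn.
    assert (X := H n ltac:(nia)).
    pose proof (tnorm_nonneg (w n - w (n+q)%nat)). pose proof (Rabs_pos (IZR k)).
    unfold tdist in *.
    replace (IZR k * w n - IZR k * w (n+q)%nat) with (IZR k * (w n - w (n+q)%nat)) by ring.
    eapply Rle_lt_trans. apply tnorm_mul. nra.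
Qed.

Theorem lemma3p1 (w : nat -> R) :
  repetition w ->
  (forall l : nat, (1 <= l)%nat -> repetition (fun n => w (n + l)%nat)) /\
  (forall l : nat, (1 <= l)%nat -> repetition (fun n => w (n * l)%nat)) /\
  (forall l : Z, repetition (fun n => IZR l * w n)) /\
  joint_repetition (fun i : {i : fam_index | fam_valid i} => fam w (proj1_sig i)).
Proof.
  intros Hw.
  pose proof (joint_from_good w _ Hw (good_all w)) as [J1 J2].
  split; [|split; [|split]].
  - intros l Hl. exact (J1 (exist _ (FShift l) Hl)).
  - intros l Hl. exact (J1 (exist _ (FDil l) Hl)).
  - intros l. exact (J1 (exist fam_valid (FMul l) I)).
  - split; assumption.
Qed.
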